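(* Assume $\beta<\infty$. The following hold. - (a) $1\le\sqrt{n}\,\beta$. - (b) $n\,\mathbb{E}|L_1|^q\le\beta^{q-2}$ for every $2\le q\le3$. - (c) If $\gamma<\infty$, then $|\kappa_s|\le\sqrt{\gamma_s}\le\sqrt{\gamma}$ for $s=1,\dots,k$. - (d) Let $3/2<\alpha<2$, put $\delta=(2-\alpha)/(\alpha-1)$, and let $s$ be an integer with $1\le s<\min(\delta^{-1},k)$. Then $|\kappa_s|\le\beta^{\delta s}+\gamma_s^{(\alpha)}\le\beta^{\delta s}+\gamma^{(\alpha)}$.
   Context: **Setting.** Let $k\ge1$ and $n\ge1$ be integers. Let $X,X_1,\dots,X_n$ be i.i.d. random variables. Let $l$ be a real Borel function. For $p=1,\dots,k$, let $t_p$ be a real Borel function of $p$ variables that is invariant under permutations of its arguments. Put $L_i=l(X_i)$. For $A=\{j_1,\dots,j_p\}\subset\{1,\dots,n\}$ with $|A|=p$, put $T_A=t_p(X_{j_1},\dots,X_{j_p})$, and write $T_{1\dots p}=T_{\{1,\dots,p\}}$. Define $\mathbb{T}=\sum_{p=1}^k\sum_{|A|=p}T_A$. **Standing assumptions.** - $\mathbb{E}L_1=0$ and $n\,\mathbb{E}L_1^2=1$. - Each $t_p(X_1,\dots,X_p)$ is integrable and degenerate: $\mathbb{E}[t_p(X_1,\dots,X_p)\mid X_2,\dots,X_p]=0$ a.s. For $p=1$ this means $\mathbb{E}t_1(X_1)=0$. **Notation.** - $\beta=n\,\mathbb{E}|L_1|^3$. - $\gamma_s=\binom{n}{s}\mathbb{E}T_{1\dots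 s}^2$ and $\gamma=\operatorname{var}\mathbb{T}=\sum_{s=1}^k\gamma_s$. - $\gamma_s^{(\alpha)}=\binom{n}{s}\mathbb{E}|T_{1\dots s}|^\alpha$ and $\gamma^{(\alpha)}=\sum_{s=1}^k\gamma_s^{(\alpha)}$. - $\kappa_s=\binom{n}{s}\mathbb{E}[L_1\cdots L_s\,\mathbb{T}]=\binom{n}{s}\mathbb{E}[L_1\cdots L_sT_{1\dots s}]$. *)

(* Defs.v *)
From HB Require Import structures.
From mathcomp Require Import all_boot all_order all_algebra.
From mathcomp Require Import all_classical all_reals all_analysis.

Set Implicit Arguments.
Unset Strict Implicit.
Unset Printing Implicit Defensive.

Import Order.TTheory GRing.Theory Num.Theory.

Local Open Scope classical_set_scope.
Local Open Scope ring_scope.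

(* Indexing convention: the paper's X_1, X_2, ... are X 0, X 1, ...
   (so the paper's X_j is X (j-1)). *)

Section defs.
Context {d} {Omega : measurableType d} {R : realType}.
Variable P : probability Omega R.

Definition Tv (t : forall p : nat, p.-tuple R -> R) (X : nat -> Omega -> R)
  (p : nat) : Omega -> R :=
  fun w => t p [tuple X (val i) w | i < p].

Definition tailvec (X : nat -> Omega -> R) (p : nat) :
  Omega -> (p.-1).-tuple R :=
  fun w => [tuple X (val i).+1 w | i < p.-1].

(* the X_i (i < N) are mutually independent: product rule for every
   finite family of events {X_i in B_i} (B_i = setT for unused indices) *)
Definition mutually_independent (N : nat) (X : nat -> Omega -> R) : Prop :=
  forall (B : nat -> set R), (forall i, measurable (B i)) ->
    P (\bigcap_(i in [set j | (j < N)%N]) (X i @^-1` B i)) =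
    (\prod_(i < N) P (X i @^-1` B i))%E.

Definition identically_distributed (N : nat) (X : nat -> Omega -> R) : Prop :=
  forall i, (i < N)%N -> forall B : set R, measurable B ->
    P (X i @^-1` B) = P (X 0%N @^-1` B).

(* degeneracy:  E[ t_p(X_1,...,X_p) | X_2,...,X_p ] = 0 a.s., i.e. (by the
   defining property of conditional expectation, the variable being
   integrable) E[ T_{1..p} 1_G ] = 0 for every G in sigma(X_2,...,X_p),
   i.e. for every G = {(X_2,...,X_p) in A} with A Borel in R^(p-1). *)
Definition degenerate (t : forall p : nat, p.-tuple R -> R)
  (X : nat -> Omega -> R) (p : nat) : Prop :=
  forall A : set ((p.-1).-tuple R), measurable A ->
    ('E_P[fun w => (Tv t X p w * \1_(tailvec X p @^-1` A) w)%R] = 0)%E.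

Definition beta (n : nat) (l : R -> R) (X : nat -> Omega -> R) : \bar R :=
  (n%:R%:E * 'E_P[fun w => (`|l (X 0%N w)| ^+ 3)%R])%E.

Definition gamma_s (n : nat) t X (s : nat) : \bar R :=
  ('C(n, s)%:R%:E * 'E_P[fun w => (Tv t X s w ^+ 2)%R])%E.

Definition gamma (n k : nat) t X : \bar R :=
  (\sum_(1 <= s < k.+1) gamma_s n t X s)%E.

Definition gamma_sa (n : nat) t X (alpha : R) (s : nat) : \bar R :=
  ('C(n, s)%:R%:E * 'E_P[fun w => (`|Tv t X s w| `^ alpha)%R])%E.

Definition gamma_a (n k : nat) t X (alpha : R) : \bar R :=
  (\sum_(1 <= s < k.+1) gamma_sa n t X alpha s)%E.

Definition kappa (n : nat) (l : R -> R) t X (s : nat) : \bar R :=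
  ('C(n, s)%:R%:E *
   'E_P[fun w => ((\prod_(i < s) l (X (val i) w)) * Tv t X s w)%R])%E.

End defs.

(* Main.v *)
Require Import Defs.
From HB Require Import structures.
From mathcomp Require Import all_boot all_order all_algebra.
From mathcomp Require Import all_classical all_reals all_analysis.
From mathcomp Require Import measurable_realfun.
From mathcomp Require Import ring lra.
Import Order.TTheory GRing.Theory Num.Theory.
Local Open Scope classical_set_scope.
Local Open Scope ring_scope.


Section transfer.
Local Open Scope ereal_scope.
Context {d} {T : measurableType d} {R : realType} (mu : {measure set T -> \bar R}).
Import HBNNSimple.

Lemma wsimple (G f : T -> R) (mG : measurable_fun setT G) (mf : measurable_fun setT f)
  (G0 : forall w, (0 <= G w)%R) (phi : {nnsfun R >-> R}) :
  \int[mu]_w (G w * phi (f w))%:E =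
  \sum_(r \in range phi) (r%:E * \int[mu]_w (G w * \1_(phi @^-1` [set r]) (f w))%:E).
Proof.
have mA r : measurable (phi @^-1` [set r]) by exact: measurable_funPTI.
have mI r : measurable_fun setT (fun w => \1_(phi @^-1` [set r]) (f w) : R).
  exact: measurableT_comp (measurable_indic (mA r)) mf.
transitivity (\int[mu]_w \sum_(r \in range phi)
    (r * (G w * \1_(phi @^-1` [set r]) (f w)))%:E).
  apply: eq_integral => w _; rewrite fsumEFin//.
  by rewrite fimfunE mulr_fsumr; congr (_%:E); apply: eq_fsbigr => r _;
    rewrite mulrCA.
rewrite ge0_integral_fsum//; last 2 first.
- move=> r; apply/measurable_EFinP; apply: measurable_funM => //.
  exact: measurable_funM.
- move=> r w _; rewrite lee_fin indicE.
  have [/set_mem /= <-|_] := boolP (f w \in phi @^-1` [set r]).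
    by rewrite mulr1 mulr_ge0.
  by rewrite mulr0 mulr0.
apply: eq_fsbigr => r /set_mem [x _ <-].
under eq_integral do rewrite EFinM.
rewrite ge0_integralZl_EFin//.
- by move=> w _; rewrite lee_fin mulr_ge0 // indicE.
- by apply/measurable_EFinP; apply: measurable_funM.
Qed.

Lemma wtransfer (G1 f1 G2 f2 : T -> R)
  (mG1 : measurable_fun setT G1) (mf1 : measurable_fun setT f1)
  (mG2 : measurable_fun setT G2) (mf2 : measurable_fun setT f2)
  (G10 : forall w, (0 <= G1 w)%R) (G20 : forall w, (0 <= G2 w)%R) :
  (forall A, measurable A ->
     \int[mu]_w (G1 w * \1_A (f1 w))%:E = \int[mu]_w (G2 w * \1_A (f2 w))%:E) ->
  forall g : R -> R, measurable_fun setT g -> (forall x, (0 <= g x)%R) ->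
  \int[mu]_w (G1 w * g (f1 w))%:E = \int[mu]_w (G2 w * g (f2 w))%:E.
Proof.
move=> H g mg g0.
have mEg : measurable_fun setT (EFin \o g) by exact/measurable_EFinP.
pose phi := nnsfun_approx (@measurableT _ R) mEg.
have L (G f : T -> R) : measurable_fun setT G -> measurable_fun setT f ->
    (forall w, (0 <= G w)%R) ->
    \int[mu]_w (G w * g (f w))%:E =
    limn (fun n => \int[mu]_w (G w * phi n (f w))%:E).
  move=> mG mf G0; rewrite -monotone_convergence //.
  - apply: eq_integral => w _; apply/esym/cvg_lim => //; rewrite EFinM.
    under eq_fun do rewrite EFinM.
    apply: cvgeZl => //.
    exact: (cvg_nnsfun_approx (@measurableT _ R) mEg (fun x _ => g0 x) (I : setT (f w))).
  - move=> n; apply/measurable_EFinP; apply: measurable_funM => //.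
    exact: measurableT_comp mf.
  - by move=> n w _; rewrite lee_fin mulr_ge0.
  - move=> w _ n m nm; rewrite lee_fin ler_wpM2l//.
    exact/lefP/nd_nnsfun_approx.
rewrite (L G1 f1)// (L G2 f2)//; congr (limn _); apply/funext => n.
rewrite !wsimple//; apply: eq_fsbigr => r _; rewrite H//.
Qed.
End transfer.


Section indep.
Local Open Scope ereal_scope.
Context {d} {Omega : measurableType d} {R : realType} (P : probability Omega R)
  (N : nat) (X : nat -> Omega -> R).
Hypotheses (mX : forall i, measurable_fun setT (X i))
  (ind : mutually_independent P N X) (idd : identically_distributed P N X).

Definition J m (B : nat -> set R) :=
  \bigcap_(i in [set j | (m <= j < N)%N]) (X i @^-1` B i).

Lemma mJ m B : (forall i, measurable (B i)) -> measurable (J m B).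
Proof.
move=> mB; apply: bigcap_measurableType => k _.
by rewrite -[X k @^-1` _]setTI; exact: mX.
Qed.

Lemma PJ m B : (forall i, measurable (B i)) -> (m <= N)%N ->
  P (J m B) = \prod_(m <= i < N) P (X i @^-1` B i).
Proof.
move=> mB mN.
pose B' i := if (i < m)%N then setT else B i.
have mB' : forall i, measurable (B' i).
  by move=> i; rewrite /B'; case: ifP.
have := @ind B' mB'.
have -> : \bigcap_(i in [set j | (j < N)%N]) (X i @^-1` B' i) = J m B.
  rewrite /J; apply/seteqP; split => w /= H i /= Hi.
  - case/andP: Hi => mi iN; have := H i iN; rewrite /B' ltnNge mi //.
  - rewrite /B'; case: ifPn => // /negbTE; rewrite ltnNge => /negbFE mi.
    by apply: H => /=; rewrite mi.
move=> ->; rewrite -(big_mkord xpredT (fun i => P (X i @^-1` B' i))).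
rewrite (big_cat_nat (leq0n m) mN) /=.
rewrite big_nat_cond big1 ?mul1e; last first.
  by move=> i /andP[/andP[_ im] _]; rewrite /B' im preimage_setT probability_setT.
apply: eq_big_nat => i /andP[mi _]; rewrite /B' ltnNge mi //.
Qed.

Lemma Jstep m B : (m < N)%N -> J m B = X m @^-1` B m `&` J m.+1 B.
Proof.
move=> mN; apply/seteqP; split => w.
- move=> H; split; first by apply: H => /=; rewrite leqnn.
  by move=> i /andP[mi iN]; apply: H => /=; rewrite iN (ltnW mi).
- move=> [H1 H2] i /andP[mi iN].
  rewrite leq_eqVlt in mi; case/orP: mi => [/eqP <-|mi] //.
  by apply: H2 => /=; rewrite mi.
Qed.


Lemma indep_prod (g : R -> R) (mg : measurable_fun setT g)
  (g0 : forall x, (0 <= g x)%R)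
  (gfin : \int[P]_w (g (X 0%N w))%:E < +oo) s : (s <= N)%N ->
  \int[P]_w (\prod_(i < s) g (X i w))%:E =
  ((fine (\int[P]_w (g (X 0%N w))%:E)) ^+ s)%:E.
Proof.
move=> sN.
set e := fine _.
have eE : \int[P]_w (g (X 0%N w))%:E = e%:E.
  rewrite fineK// ge0_fin_numE// integral_ge0// => w _; exact: g0.
have e0 : (0 <= e)%R by rewrite fine_ge0// integral_ge0// => w _; rewrite lee_fin.
have mF m : measurable_fun setT (fun w => \prod_(i < m) g (X i w))%R.
  by apply: measurable_prod => i _; exact: measurableT_comp.
have F0 m w : (0 <= \prod_(i < m) g (X i w))%R by apply: prodr_ge0.
have claim m : (m <= N)%N -> forall B, (forall i, measurable (B i)) ->
  \int[P]_w ((\prod_(i < m) g (X i w)) * \1_(J m B) w)%:E = (e ^+ m)%:E * P (J m B).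
  elim: m => [_ B mB|m IH mN B mB].
    under eq_integral do rewrite big_ord0 mul1r.
    by rewrite integral_indic ?setIT ?expr0 ?mul1e//; exact: mJ.
  have IH' := IH (ltnW mN).
  pose c := (e ^+ m * fine (P (J m.+1 B)))%R.
  have c0 : (0 <= c)%R by rewrite mulr_ge0 ?exprn_ge0// fine_ge0.
  transitivity (\int[P]_w (((\prod_(i < m) g (X i w)) * \1_(J m.+1 B) w) * g (X m w))%:E).
    apply: eq_integral => w _; rewrite big_ord_recr /=.
    by rewrite -mulrA [X in (_ * X)%R]mulrC mulrA.
  have mG1 : measurable_fun setT
      (fun w => (\prod_(i < m) g (X i w)) * \1_(J m.+1 B) w)%R.
    apply: measurable_funM => //; apply: measurable_indic; exact: mJ.
  have G10 w : (0 <= (\prod_(i < m) g (X i w)) * \1_(J m.+1 B) w)%R.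
    by rewrite mulr_ge0// indicE.
  have H : forall A, measurable A ->
     \int[P]_w ((\prod_(i < m) g (X i w) * \1_(J m.+1 B) w) * \1_A (X m w))%:E =
     \int[P]_w (c * \1_A (X 0%N w))%:E.
    move=> A mA.
    pose B' i := if i == m then A else B i.
    have mB' i : measurable (B' i) by rewrite /B'; case: ifP.
    have JB' : J m.+1 B' = J m.+1 B.
      rewrite /J; apply/seteqP; split => w /= H i /= /andP[mi iN].
      + have Hi := H i; rewrite /B' gtn_eqF// in Hi; apply: Hi => /=.
        by rewrite mi iN.
      + by rewrite /B' gtn_eqF//; apply: H => /=; rewrite mi iN.
    have JmB' : J m B' = X m @^-1` A `&` J m.+1 B.
      by rewrite Jstep// -JB' /B' eqxx.
    transitivity (\int[P]_w ((\prod_(i < m) g (X i w)) * \1_(J m B') w)%:E).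
      apply: eq_integral => w _; rewrite JmB' indicI /=.
      by rewrite -mulrA [X in (_ * X)%R]mulrC.
    rewrite IH'//; under eq_integral do rewrite EFinM.
    rewrite ge0_integralZl_EFin//; last first.
      apply/measurable_EFinP; exact: measurableT_comp (measurable_indic mA) (mX 0%N).
    rewrite (eq_integral (fun x => (\1_(X 0%N @^-1` A) x)%:E))//.
    rewrite integral_indic//; last by rewrite -[X 0%N @^-1` A]setTI; exact: mX.
    rewrite setIT -[X in _ = _ * X]/(P (X 0%N @^-1` A)) -(idd m mN A mA).
    rewrite (PJ m B' mB' (ltnW mN)) big_ltn// /B' eqxx.
    have -> : \prod_(m.+1 <= i < N) P (X i @^-1` (if i == m then A else B i)) =
        \prod_(m.+1 <= i < N) P (X i @^-1` B i).
      by apply: eq_big_nat => i /andP[mi _]; rewrite gtn_eqF.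
    rewrite -(PJ m.+1 B mB mN) /c EFinM fineK ?fin_num_measure//; last exact: mJ.
    by rewrite -muleA; congr (_ * _); exact: muleC.
  rewrite (@wtransfer _ _ _ P _ _ _ _ mG1 (mX m) (measurable_cst c) (mX 0%N) G10 (fun=> c0) H g mg g0).
  under eq_integral do rewrite EFinM.
  rewrite ge0_integralZl_EFin//; last 2 first.
  + by move=> w _; rewrite lee_fin.
  + by apply/measurable_EFinP; apply: measurableT_comp.
  have hf : P (J m.+1 B) = (fine (P (J m.+1 B)))%:E.
    by rewrite fineK// fin_num_measure//; exact: mJ.
  rewrite eE /c [in RHS]hf -!EFinM; congr (_%:E).
  by rewrite exprSr mulrAC.
have := claim s sN (fun _ => setT) (fun _ => measurableT).
have -> : J s (fun _ => setT) = setT.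
  by apply/seteqP; split => // w _ i _.
rewrite probability_setT mule1 => <-.
by apply: eq_integral => w _; rewrite indicT mulr1.
Qed.
End indep.


Section hold.
Local Open Scope ereal_scope.
Context {d} {T : measurableType d} {R : realType} (mu : {measure set T -> \bar R}).

Lemma holdE (U V : T -> R) (p q : R) : measurable_fun setT U -> measurable_fun setT V ->
  (0 < p)%R -> (0 < q)%R -> (p^-1 + q^-1 = 1)%R ->
  \int[mu]_w (`|U w * V w|)%:E <=
  (\int[mu]_w (`|U w| `^ p)%:E) `^ p^-1 * (\int[mu]_w (`|V w| `^ q)%:E) `^ q^-1.
Proof.
move=> mU mV p0 q0 pq.
have := hoelder mu mU mV p0 q0 pq.
rewrite !unlock /=.
under eq_integral do rewrite powRr1//.
by rewrite invr1 poweRe1// integral_ge0.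
Qed.
End hold.


Lemma ffact_leexp n s : (n ^_ s <= n ^ s)%N.
Proof.
elim: s n => [n|s IH n]; first by rewrite ffactn0 expn0.
rewrite ffactnS expnS leq_mul2l; apply/orP; right.
apply: leq_trans (IH n.-1) _.
by case: s {IH} => [|s]; rewrite ?expn0 ?leq_exp2r// leq_pred.
Qed.

Lemma binom_le n s : ('C(n, s) <= n ^ s)%N.
Proof.
apply: leq_trans (ffact_leexp n s); rewrite -bin_ffact.
by rewrite leq_pmulr// fact_gt0.
Qed.

Lemma young2 {R : realType} (x z p r : R) : 0 <= x -> 0 <= z -> 0 < p -> 0 < r ->
  p^-1 + r^-1 = 1 -> x `^ p^-1 * z `^ r^-1 <= x + z.
Proof.
move=> x0 z0 p0 r0 pr.
have := @conjugate_powR R (x `^ p^-1) (z `^ r^-1) p r (powR_ge0 _ _) (powR_ge0 _ _) p0 r0 pr.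
rewrite -!powRrM !mulVf ?gt_eqF// !powRr1//.
move/le_trans; apply.
have a0 : 0 < p^-1 by rewrite invr_gt0.
have c0 : 0 < r^-1 by rewrite invr_gt0.
by apply: lerD; apply: ler_piMr => //; lra.
Qed.


Section moments.
Local Open Scope ereal_scope.
Context {d} {T : measurableType d} {R : realType} (P : probability T R) (Y : T -> R).
Hypotheses (mY : measurable_fun setT Y) (Y0 : forall w, (0 <= Y w)%R).
Variables (a2 a3 : R).
Hypotheses (h2 : \int[P]_w (Y w ^+ 2)%:E = a2%:E) (h3 : \int[P]_w (Y w ^+ 3)%:E = a3%:E).

Let PT : (P : measure T R) [set: T] = 1%E.
Proof. exact: probability_setT. Qed.

Lemma a2_ge0 : (0 <= a2)%R.
Proof. by rewrite -lee_fin -h2 integral_ge0// => w _; rewrite lee_fin exprn_ge0. Qed.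
Lemma a3_ge0 : (0 <= a3)%R.
Proof. by rewrite -lee_fin -h3 integral_ge0// => w _; rewrite lee_fin exprn_ge0. Qed.

Lemma lyap : (a2 ^+ 3 <= a3 ^+ 2)%R.
Proof.
have mU : measurable_fun setT (fun w => Y w ^+ 2)%R by exact: measurable_funX.
have := @holdE _ _ _ P (fun w => Y w ^+ 2)%R (cst 1%R) (3/2) 3 mU (measurable_cst _)
  ltac:(lra) ltac:(lra) ltac:(rewrite invf_div; lra).
under eq_integral do rewrite mulr1 ger0_norm ?exprn_ge0//.
have e1 w : (`|Y w ^+ 2| `^ (3/2) = Y w ^+ 3)%R.
  rewrite ger0_norm ?exprn_ge0// -powR_mulrn// -powRrM.
  by rewrite (_ : 2%:R * (3/2) = 3%:R)%R ?powR_mulrn//; lra.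
rewrite [X in _ <= X `^ _ * _](eq_integral (fun w => (Y w ^+ 3)%:E)); last first.
  by move=> w _; rewrite e1.
rewrite [X in _ <= _ * X `^ _](eq_integral (cst 1)); last first.
  by move=> w _; rewrite /= normr1 powR1.
rewrite integral_cst// PT mul1e poweR_EFin powR1 mule1 h2 h3 poweR_EFin lee_fin.
move=> H.
have := @lerXn2r R 3 a2 (a3 `^ (3/2)^-1)%R ltac:(rewrite nnegrE; exact: a2_ge0)
  ltac:(rewrite nnegrE; exact: powR_ge0) H.
move/le_trans; apply.
rewrite -(powR_mulrn 3 (powR_ge0 _ _)) -powRrM invf_div.
rewrite (_ : (2/3 * 3%:R = 2%:R)%R) ?powR_mulrn//; last lra.
exact: a3_ge0.
Qed.

Lemma interp q : (2 <= q <= 3)%R ->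
  \int[P]_w (Y w `^ q)%:E <= (a2 `^ (3 - q) * a3 `^ (q - 2))%:E.
Proof.
move=> /andP[q2 q3].
have [->|q2'] := eqVneq q 2%R.
  under eq_integral do rewrite powR_mulrn//.
  rewrite h2 lee_fin (_ : 3 - 2 = 1)%R; last lra.
  by rewrite subrr powRr0 mulr1 powRr1// a2_ge0.
have [->|q3'] := eqVneq q 3%R.
  under eq_integral do rewrite powR_mulrn//.
  rewrite h3 lee_fin (_ : 3 - 2 = 1)%R; last lra.
  by rewrite subrr powRr0 mul1r powRr1// a3_ge0.
have q2s : (2 < q)%R by rewrite lt_neqAle eq_sym q2' q2.
have q3s : (q < 3)%R by rewrite lt_neqAle q3' q3.
pose U w := (Y w `^ (2 * (3 - q)))%R.
pose V w := (Y w `^ (3 * (q - 2)))%R.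
have mU : measurable_fun setT U by exact: measurableT_comp (measurable_powR _) mY.
have mV : measurable_fun setT V by exact: measurableT_comp (measurable_powR _) mY.
have := @holdE _ _ _ P U V (3 - q)^-1 (q - 2)^-1 mU mV
  ltac:(rewrite invr_gt0; lra) ltac:(rewrite invr_gt0; lra) ltac:(rewrite !invrK; lra).
have eUV w : (`|U w * V w| = Y w `^ q)%R.
  rewrite ger0_norm ?mulr_ge0 ?powR_ge0// /U /V -powRD; last first.
    by apply/implyP => /eqP; lra.
  by rewrite (_ : 2 * (3 - q) + 3 * (q - 2) = q)%R //; lra.
have eU w : (`|U w| `^ (3 - q)^-1 = Y w ^+ 2)%R.
  rewrite ger0_norm ?powR_ge0// /U -powRrM -powR_mulrn//.
  rewrite (_ : 2 * (3 - q) * (3 - q)^-1 = 2)%R //.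
  by rewrite -mulrA mulfV ?mulr1//; apply/eqP; lra.
have eV w : (`|V w| `^ (q - 2)^-1 = Y w ^+ 3)%R.
  rewrite ger0_norm ?powR_ge0// /V -powRrM -powR_mulrn//.
  rewrite (_ : 3 * (q - 2) * (q - 2)^-1 = 3)%R //.
  by rewrite -mulrA mulfV ?mulr1//; apply/eqP; lra.
under eq_integral do rewrite eUV.
rewrite [X in _ <= X `^ _ * _](eq_integral (fun w => (Y w ^+ 2)%:E)); last first.
  by move=> w _; rewrite eU.
rewrite [X in _ <= _ * X `^ _](eq_integral (fun w => (Y w ^+ 3)%:E)); last first.
  by move=> w _; rewrite eV.
by rewrite h2 h3 !poweR_EFin !invrK -EFinM.
Qed.

End moments.


Lemma le_sum1 {R : realType} (F : nat -> \bar R) k s : (forall i, (0 <= F i)%E) ->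
  (1 <= s <= k)%N -> (F s <= \sum_(1 <= i < k.+1) F i)%E.
Proof.
move=> F0 /andP[s1 sk].
rewrite (@big_cat_nat _ _ _ s) //=; last by rewrite ltnW.
apply: (@le_trans _ _ (\sum_(s <= i < k.+1) F i)%E).
  by rewrite big_ltn//; apply: leeDl; exact: sume_ge0.
by apply: leeDr; exact: sume_ge0.
Qed.

Lemma powR_prod {R : realType} (x : nat -> R) (p : R) s : (forall i, 0 <= x i) ->
  (\prod_(i < s) x i) `^ p = \prod_(i < s) (x i `^ p).
Proof.
move=> x0; elim: s => [|s IH]; first by rewrite !big_ord0 powR1.
by rewrite !big_ord_recr /= powRM ?IH// prodr_ge0.
Qed.

Theorem lemma1 (d : measure_display) (Omega : measurableType d) (R : realType)
  (P : probability Omega R) (k n : nat)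
  (X : nat -> Omega -> R) (l : R -> R)
  (t : forall p : nat, p.-tuple R -> R) :
  (1 <= k)%N -> (1 <= n)%N ->
  (* X_1, ..., X_n (and, harmlessly, up to index max(n,k)) are i.i.d. *)
  (forall i, measurable_fun setT (X i)) ->
  mutually_independent P (maxn n k) X ->
  identically_distributed P (maxn n k) X ->
  (* l is Borel, E L_1 = 0, n E L_1^2 = 1 *)
  measurable_fun setT l ->
  P.-integrable setT (EFin \o (fun w => l (X 0%N w))) ->
  ('E_P[fun w => l (X 0%N w)] = 0)%E ->
  (n%:R%:E * 'E_P[fun w => (l (X 0%N w) ^+ 2)%R] = 1)%E ->
  (* t_p Borel, symmetric, t_p(X_1..X_p) integrable and degenerate *)
  (forall p, (1 <= p <= k)%N -> measurable_fun setT (t p)) ->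
  (forall p, (1 <= p <= k)%N -> forall x y : p.-tuple R,
      perm_eq x y -> t p x = t p y) ->
  (forall p, (1 <= p <= k)%N -> P.-integrable setT (EFin \o Tv t X p)) ->
  (forall p, (1 <= p <= k)%N -> degenerate P t X p) ->
  (* beta < oo *)
  (beta P n l X < +oo)%E ->
  let b := fine (beta P n l X) in
  (* (a) *)
  1 <= Num.sqrt n%:R * b /\
  (* (b) *)
  (forall q : R, 2 <= q <= 3 ->
     (n%:R%:E * 'E_P[fun w => (`|l (X 0%N w)| `^ q)%R] <= (b `^ (q - 2))%:E)%E) /\
  (* (c) *)
  ((gamma P n k t X < +oo)%E ->
     forall s, (1 <= s <= k)%N ->
       (`|kappa P n l t X s| <= (Num.sqrt (fine (gamma_s P n t X s)))%:E)%E /\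
       Num.sqrt (fine (gamma_s P n t X s)) <= Num.sqrt (fine (gamma P n k t X))) /\
  (* (d) *)
  (forall alpha : R, 3 / 2 < alpha < 2 ->
     let delta := (2 - alpha) / (alpha - 1) in
     forall s : nat, (1 <= s)%N -> s%:R < delta^-1 -> (s < k)%N ->
       (`|kappa P n l t X s| <=
          (b `^ (delta * s%:R))%:E + gamma_sa P n t X alpha s)%E /\
       ((b `^ (delta * s%:R))%:E + gamma_sa P n t X alpha s <=
          (b `^ (delta * s%:R))%:E + gamma_a P n k t X alpha)%E).
Proof.
move=> k1 n1 mX ind idd ml iL EL0 EL2 mt symt iT degT bfin b.
have mL : measurable_fun setT (fun w => l (X 0%N w)) := measurableT_comp ml (mX 0%N).
have mY : measurable_fun setT (fun w => `|l (X 0%N w)|) :=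
  measurableT_comp (@normr_measurable R setT) mL.
have n0 : (0 < n%:R :> R) by rewrite ltr0n.
have [r2 E2 nr2] : exists2 r2 : R,
    ('E_P[fun w => (l (X 0%N w) ^+ 2)%R] = r2%:E)%E & n%:R * r2 = 1.
  move: EL2; set m := ('E_P[_])%E.
  have : (0 <= m)%E by rewrite /m unlock integral_ge0// => w _; rewrite lee_fin sqr_ge0.
  case: m => [r _ /= H||] //.
  + by exists r => //; move: H; rewrite -EFinM => -[].
  + by move=> _; rewrite gt0_muley ?lte_fin.
have r2E : r2 = n%:R^-1.
  by apply: (mulfI (lt0r_neq0 n0)); rewrite nr2 mulfV// lt0r_neq0.
have [r3 E3 bE] : exists2 r3 : R,
    ('E_P[fun w => (`|l (X 0%N w)| ^+ 3)%R] = r3%:E)%E & b = n%:R * r3.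
  move: bfin; rewrite /b /beta; set m := ('E_P[_])%E.
  have : (0 <= m)%E by rewrite /m unlock integral_ge0// => w _; rewrite lee_fin exprn_ge0.
  case: m => [r _ /= H||] //.
  + by exists r.
  + by move=> _; rewrite gt0_muley ?lte_fin.
have h2 : (\int[P]_w (`|l (X 0%N w)| ^+ 2)%:E = r2%:E)%E.
  rewrite -E2 unlock; apply: eq_integral => w _.
  by rewrite -normrX ger0_norm ?sqr_ge0.
have h3 : (\int[P]_w (`|l (X 0%N w)| ^+ 3)%:E = r3%:E)%E by rewrite -E3 unlock.
have Y0 w : 0 <= `|l (X 0%N w)| by [].
have r30 : 0 <= r3.
  by rewrite -lee_fin -h3 integral_ge0// => w _; rewrite lee_fin exprn_ge0.
have b0 : 0 <= b by rewrite bE mulr_ge0// ltW.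
have Ly := @lyap _ _ _ P _ mY Y0 _ _ h2 h3.
have partb : forall q : R, 2 <= q <= 3 ->
     (n%:R%:E * 'E_P[fun w => (`|l (X 0%N w)| `^ q)%R] <= (b `^ (q - 2))%:E)%E.
  move=> q q23; rewrite unlock.
  have I := @interp _ _ _ P _ mY Y0 _ _ h2 h3 q q23.
  apply: le_trans (lee_wpmul2l _ I) _; first by rewrite lee_fin ler0n.
  rewrite -EFinM lee_fin.
  have e : n%:R * n%:R `^ (-1 * (3 - q)) = n%:R `^ (q - 2) :> R.
    rewrite -[in RHS](_ : 1 + -1 * (3 - q) = q - 2); last lra.
    by rewrite powRD ?powRr1 ?ler0n//; apply/implyP => _; exact: lt0r_neq0.
  rewrite bE powRM ?ler0n// r2E -powR_inv1 ?ler0n// -powRrM mulrA e.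
  exact: lexx.
split.
  have x0 : 0 <= Num.sqrt n%:R * b by rewrite mulr_ge0 ?sqrtr_ge0.
  rewrite -(@ler_pXn2r _ 2) ?nnegrE // expr1n.
  rewrite exprMn sqr_sqrtr ?ler0n // bE exprMn mulrA -exprS.
  rewrite -[X in X <= _](expr1n _ 3) -[X in X ^+ 3 <= _]nr2 exprMn.
  by apply: ler_wpM2l => //; rewrite exprn_ge0// ler0n.
split; first exact: partb.
pose N := maxn n k.
have mU s : measurable_fun setT (fun w => \prod_(i < s) l (X i w)).
  by apply: measurable_prod => i _; exact: measurableT_comp ml (mX i).
have mV s : (1 <= s <= k)%N -> measurable_fun setT (Tv t X s).
  by move=> sk; have /integrableP[/measurable_EFinP] := iT s sk.
have kapE s : kappa P n l t X s =
    ('C(n, s)%:R%:E * \int[P]_w ((\prod_(i < s) l (X i w)) * Tv t X s w)%:E)%E.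
  by rewrite /kappa unlock.
have gsE s : gamma_s P n t X s =
    ('C(n, s)%:R%:E * \int[P]_w (Tv t X s w ^+ 2)%:E)%E.
  by rewrite /gamma_s unlock.
have gs0 s : (0 <= gamma_s P n t X s)%E.
  by rewrite gsE mule_ge0 ?lee_fin ?ler0n// integral_ge0// => w _; rewrite lee_fin sqr_ge0.
have CnE s : ('C(n, s)%:R <= n%:R ^+ s :> R).
  by rewrite -natrX ler_nat binom_le.
split.
  move=> gfin s /andP[s1 sk].
  have gs_le : (gamma_s P n t X s <= gamma P n k t X)%E.
    by apply: le_sum1 => //; rewrite s1 sk.
  have g0 : (0 <= gamma P n k t X)%E by apply: sume_ge0 => i _.
  have gfn : gamma P n k t X \is a fin_num by rewrite ge0_fin_numE.
  have gsfn : gamma_s P n t X s \is a fin_num.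
    by rewrite ge0_fin_numE// (le_lt_trans gs_le).
  split; last first.
    by rewrite ler_sqrt ?fine_ge0// fine_le.
  have [C0|Cpos] : 'C(n, s) = 0%N \/ (0 < 'C(n, s))%N.
    by case: ('C(n, s)) => [|c]; [left|right].
    by rewrite kapE C0 mul0e abse0 lee_fin sqrtr_ge0.
  have sn : (s <= n)%N by rewrite -bin_gt0.
  have sN : (s <= N)%N by rewrite /N leq_max sk orbT.
  have Cp : (0 < 'C(n, s)%:R :> R) by rewrite ltr0n.
  have [r2t E2t r2t0] : exists2 r : R,
      (\int[P]_w (Tv t X s w ^+ 2)%:E = r%:E)%E & 0 <= r.
    move: gsfn; rewrite gsE.
    have : (0 <= \int[P]_w (Tv t X s w ^+ 2)%:E)%E.
      by apply: integral_ge0 => w _; rewrite lee_fin sqr_ge0.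
    case: (\int[P]_w _)%E => [r r0 _||] //.
    + by exists r => //; rewrite -lee_fin.
    + by move=> _; rewrite gt0_muley ?lte_fin.
  have H := @holdE _ _ _ P _ _ 2 2 (mU s) (mV s (introT andP (conj s1 sk)))
    ltac:(lra) ltac:(lra) ltac:(lra).
  have gfin2 : (\int[P]_w ((fun x => l x ^+ 2) (X 0%N w))%:E < +oo)%E.
    by move: E2; rewrite unlock => /= ->; exact: ltry.
  have IP := @indep_prod _ _ _ P N X mX ind idd (fun x => l x ^+ 2)
    (measurable_funX 2 ml) (fun x => sqr_ge0 _) gfin2 s sN.
  rewrite [X in (_ <= X `^ _ * _)%E](eq_integral (fun w => (\prod_(i < s) l (X i w) ^+ 2)%:E)) in H;
    last by move=> w _; rewrite powR_mulrn// -normrX ger0_norm ?sqr_ge0// prodrXl.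
  rewrite [X in (_ <= _ * X `^ _)%E](eq_integral (fun w => (Tv t X s w ^+ 2)%:E)) in H;
    last by move=> w _; rewrite powR_mulrn// -normrX ger0_norm ?sqr_ge0.
  move: E2 IP; rewrite unlock /= => E2 IP.
  rewrite E2 /= in IP; rewrite IP E2t !poweR_EFin in H.
  rewrite kapE abseM abse_EFin ger0_norm ?ler0n//.
  apply: le_trans (lee_wpmul2l _ (le_abse_integral _ _ _)) _.
  - by rewrite lee_fin ler0n.
  - done.
  - apply/measurable_EFinP; apply: measurable_funM => //.
    by apply: mV; rewrite s1 sk.
  under eq_integral do rewrite abse_EFin.
  apply: le_trans (lee_wpmul2l _ H) _; first by rewrite lee_fin ler0n.
  rewrite -!EFinM lee_fin gsE E2t -EFinM /= !powR12_sqrt ?exprn_ge0 ?ler0n//; last first.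
    by rewrite r2E invr_ge0 ler0n.
  have r2ge0 : 0 <= r2 by rewrite r2E invr_ge0 ler0n.
  rewrite sqrtrM ?ler0n // mulrA; apply: ler_wpM2r; first exact: sqrtr_ge0.
  have Ca : 'C(n, s)%:R * r2 ^+ s <= 1.
    rewrite r2E exprVn -/(_ / _) ler_pdivrMr ?exprn_gt0 // mul1r; exact: CnE.
  rewrite -(@ler_pXn2r _ 2) ?nnegrE ?mulr_ge0 ?sqrtr_ge0 ?ler0n//.
  rewrite exprMn !sqr_sqrtr ?exprn_ge0 ?ler0n// expr2 -mulrA.
  by apply: ler_piMr => //; rewrite ler0n.
move=> alpha /andP[al1 al2] delta s s1 _ sk.
have skk : (1 <= s <= k)%N by rewrite s1 ltnW.
have gsa0 i : (0 <= gamma_sa P n t X alpha i)%E.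
  rewrite /gamma_sa unlock mule_ge0 ?lee_fin ?ler0n// integral_ge0//. 
split; last by apply: leeD2l; apply: le_sum1.
have [C0|Cpos] : 'C(n, s) = 0%N \/ (0 < 'C(n, s))%N.
  by case: ('C(n, s)) => [|c]; [left|right].
  rewrite kapE C0 mul0e abse0; apply: adde_ge0 => //.
  by rewrite lee_fin powR_ge0.
have sn : (s <= n)%N by rewrite -bin_gt0.
have sN : (s <= N)%N by rewrite /N leq_max (ltnW sk) orbT.
have Cp : (0 < 'C(n, s)%:R :> R) by rewrite ltr0n.
pose p := alpha / (alpha - 1).
have am1 : alpha - 1 != 0 by apply/eqP; lra.
have a0 : alpha != 0 by apply/eqP; lra.
have dE : delta = p - 2 by rewrite /delta /p; field.
have pa : p^-1 + alpha^-1 = 1 by rewrite /p invf_div; field.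
have p23 : 2 <= p <= 3.
  have h : 0 < alpha - 1 by lra.
  by rewrite /p ler_pdivlMr // ler_pdivrMr //; apply/andP; split; lra.
have p0 : 0 < p by case/andP: p23 => p2 _; lra.
have alp0 : 0 < alpha by lra.
rewrite /gamma_sa unlock.
have : (0 <= \int[P]_w (`|Tv t X s w| `^ alpha)%:E)%E.
  by apply: integral_ge0 => w _; rewrite lee_fin powR_ge0.
case E3t : (\int[P]_w _)%E => [ry||] // ry0; last first.
  by rewrite gt0_muley ?lte_fin// addey// leey.
have [M EM nM] : exists2 M : R,
    (\int[P]_w ((fun x => `|l x| `^ p) (X 0%N w))%:E = M%:E)%E &
    n%:R * M <= b `^ (p - 2).
  have := partb p p23; rewrite unlock /=.
  have : (0 <= \int[P]_w (`|l (X 0%N w)| `^ p)%:E)%E.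
    by apply: integral_ge0 => w _; rewrite lee_fin powR_ge0.
  case: (\int[P]_w _)%E => [r _||] //.
  + by rewrite -EFinM lee_fin => H; exists r.
  + by move=> _; rewrite gt0_muley ?lte_fin// leey_eq.
have M0 : 0 <= M by rewrite -lee_fin -EM integral_ge0// => w _; rewrite lee_fin powR_ge0.
have mg : measurable_fun setT (fun x => `|l x| `^ p).
  exact: measurableT_comp (measurable_powR p) (measurableT_comp (@normr_measurable R setT) ml).
have IP := @indep_prod _ _ _ P N X mX ind idd (fun x => `|l x| `^ p)
    mg (fun x => powR_ge0 _ _) ltac:(rewrite EM; exact: ltry) s sN.
rewrite EM /= in IP.
have H := @holdE _ _ _ P _ _ p alpha (mU s) (mV s skk) p0 alp0 pa.
rewrite [X in (_ <= X `^ _ * _)%E](eq_integral (fun w => (\prod_(i < s) `|l (X i w)| `^ p)%:E)) in H;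
  last by move=> w _; rewrite normr_prod (powR_prod (fun i => `|l (X i w)|) p s (fun i => normr_ge0 _)).
rewrite IP E3t !poweR_EFin in H.
rewrite kapE abseM abse_EFin ger0_norm ?ler0n//.
apply: le_trans (lee_wpmul2l _ (le_abse_integral _ _ _)) _.
- by rewrite lee_fin ler0n.
- done.
- by apply/measurable_EFinP; apply: measurable_funM => //; exact: mV.
under eq_integral do rewrite abse_EFin.
apply: le_trans (lee_wpmul2l _ H) _; first by rewrite lee_fin ler0n.
rewrite -!EFinM -EFinD lee_fin.
set C := 'C(n, s)%:R.
have eC : C * ((M ^+ s) `^ p^-1 * ry `^ alpha^-1) =
    (C * M ^+ s) `^ p^-1 * (C * ry) `^ alpha^-1.
  rewrite !powRM ?exprn_ge0 ?ler0n// mulrACA -powRD; last first.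
    by apply/implyP => _; exact: lt0r_neq0.
  by rewrite pa powRr1 // ler0n.
have x0 : 0 <= C * M ^+ s by rewrite mulr_ge0 ?ler0n ?exprn_ge0.
have z0 : 0 <= C * ry by rewrite mulr_ge0 ?ler0n.
rewrite eC; apply: le_trans (@young2 R _ _ p alpha x0 z0 p0 alp0 pa) _.
apply: lerD => //.
apply: (@le_trans _ _ ((n%:R * M) ^+ s)).
  by rewrite exprMn ler_wpM2r ?exprn_ge0// CnE.
rewrite dE powRrM powR_mulrn ?powR_ge0//.
apply: lerXn2r => //; rewrite nnegrE ?mulr_ge0 ?ler0n ?powR_ge0//.
Qed.
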